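(* Let $\zeta=e^{5\pi i/6}$ (a primitive $12$th root of unity) and $m^{I}=\begin{pmatrix}\frac23&-\frac7{12}\\-\frac7{12}&\frac23\end{pmatrix}$, $m^{II}=\begin{pmatrix}\frac23&-\frac34\\-\frac34&1\end{pmatrix}$, $m^{III}=\begin{pmatrix}\frac16&-\frac14\\-\frac14&1\end{pmatrix}$. Then the braidings $e^{i\pi m^{X}_{kl}}$ have diagrams: I: $q_{11}=q_{22}=-\zeta^2$, $q_{12}q_{21}=\zeta$, Cartan matrix $\begin{pmatrix}2&-2\\-2&2\end{pmatrix}$; II: $q_{11}=-\zeta^2$, $q_{22}=-1$, $q_{12}q_{21}=\zeta^3$, Cartan matrix $\begin{pmatrix}2&-2\\-1&2\end{pmatrix}$; III: $q_{11}=-\zeta^{-1}$, $q_{22}=-1$, $q_{12}q_{21}=-\zeta^3$, Cartan matrix $\begin{pmatrix}2&-3\\-1&2\end{pmatrix}$. Moreover $m^{II}$ is the reflection $\mathcal R^1$ of $m^I$ (new simple roots $-\alpha_1,\alpha_2+2\alpha_1$), $m^{III}=P^Tm^{II}P$ with $P=\begin{pmatrix}1&0\\1&-1\end{pmatrix}$ (the reflection of chamber II at its second simple root), and $m^I$ realises $q^I$; in these chambers every simple root is $m$-truncation except the first simple root of chamber III, which is $m$-Cartan.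
   Context: Let $q=(q_{ij})$ be a diagonal braiding matrix, $\chi$ the bicharacter on $\mathbb Z^n$ with $\chi(\alpha_i,\alpha_j)=q_{ij}$ on the standard basis. Its Cartan matrix has $a_{ii}=2$ and $a_{ij}=-\min\{s\in\mathbb Z_{\ge0}:q_{ii}^{-s}=q_{ij}q_{ji}\text{ or }q_{ii}^{s+1}=1\}$. The reflection $\mathcal R^k$ is $\alpha_i\mapsto\alpha_i-a_{ki}\alpha_k$; reflected braiding $\chi(\mathcal R^k\alpha_i,\mathcal R^k\alpha_j)$; for a real symmetric $m$ (Gram matrix of $(\cdot,\cdot)_m$), $\mathcal R^k(m)_{ij}=(\mathcal R^k\alpha_i,\mathcal R^k\alpha_j)_m$. Condition (A) for a pair $i\neq j$: $2m_{ij}=a_{ij}m_{ii}$; (B): $(1-a_{ij})m_{ii}=2$. $m$ realises $q$ if $e^{i\pi m_{ij}}=q_{ij}$, every pair satisfies (A) or (B), and this persists after any finite sequence of reflections (each using the current Cartan matrix). A simple root is $m$-Cartan if (A) holds for all pairs $(i,j)$, $j\ne i$, and $m$-truncation if (B) does. *)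

(* Defs.v *)
From HB Require Import structures.
From mathcomp Require Import all_boot all_order all_algebra all_field.
From Stdlib Require Import ClassicalEpsilon.
Set Implicit Arguments. Unset Strict Implicit. Unset Printing Implicit Defensive.
Import Order.TTheory GRing.Theory Num.Theory.
Local Open Scope ring_scope.

(* e^{i pi r} for rational r = p/d (d > 0): (e^{i pi/d})^p, where
   d.-root (-1) is the d-th root of -1 of minimal nonnegative argument,
   i.e. e^{i pi / d}. *)
Definition eipi (r : rat) : algC := ((`|denq r|%N).-root (-1)) ^ (numq r).

Definition cartan_pred n (q : 'M[algC]_n) (i j : 'I_n) : pred nat :=
  fun s => (q i i ^- s == q i j * q j i) || (q i i ^+ s.+1 == 1).

Definition cartan_finite n (q : 'M[algC]_n) : Prop :=
  forall i j : 'I_n, i != j -> exists s, cartan_pred q i j s.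

Definition cartan_s n (q : 'M[algC]_n) (i j : 'I_n) : nat :=
  match excluded_middle_informative (exists s, cartan_pred q i j s) with
  | left H => ex_minn H
  | right _ => 0%N
  end.

(* Cartan matrix: a_ii = 2, a_ij = - min{s : ...} (only meaningful when
   cartan_finite q holds). *)
Definition cartan n (q : 'M[algC]_n) : 'M[int]_n :=
  \matrix_(i, j) if i == j then 2 else - ((cartan_s q i j)%:Z).

(* bicharacter chi on Z^n with chi(alpha_i, alpha_j) = q_ij *)
Definition chi n (q : 'M[algC]_n) (a b : 'I_n -> int) : algC :=
  \prod_(i < n) \prod_(j < n) q i j ^ (a i * b j).

(* coordinates of R^k alpha_i = alpha_i - a_ki alpha_k *)
Definition refl_vec n (A : 'M[int]_n) (k i : 'I_n) : 'I_n -> int :=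
  fun l => (l == i)%:Z - A k i * (l == k)%:Z.

Definition refl_braid n (q : 'M[algC]_n) (A : 'M[int]_n) (k : 'I_n)
  : 'M[algC]_n :=
  \matrix_(i, j) chi q (refl_vec A k i) (refl_vec A k j).

Definition refl_gram n (m : 'M[rat]_n) (A : 'M[int]_n) (k : 'I_n)
  : 'M[rat]_n :=
  \matrix_(i, j) \sum_(l < n) \sum_(l' < n)
     ((refl_vec A k i l)%:~R * (refl_vec A k j l')%:~R * m l l').

Definition refl_step n (qm : 'M[algC]_n * 'M[rat]_n) (k : 'I_n) :=
  let A := cartan qm.1 in (refl_braid qm.1 A k, refl_gram qm.2 A k).

Definition refl_iter n (qm : 'M[algC]_n * 'M[rat]_n) (ks : seq 'I_n) :=
  foldl (@refl_step n) qm ks.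

Definition condA n (A : 'M[int]_n) (m : 'M[rat]_n) (i j : 'I_n) : Prop :=
  2 * m i j = (A i j)%:~R * m i i.
Definition condB n (A : 'M[int]_n) (m : 'M[rat]_n) (i j : 'I_n) : Prop :=
  (1 - (A i j)%:~R) * m i i = 2.

Definition realises n (m : 'M[rat]_n) (q : 'M[algC]_n) : Prop :=
  m^T = m /\
  (forall i j, eipi (m i j) = q i j) /\
  forall ks : seq 'I_n,
    let qm := refl_iter (q, m) ks in
    cartan_finite qm.1 /\
    forall i j, i != j -> condA (cartan qm.1) qm.2 i j \/
                          condB (cartan qm.1) qm.2 i j.

Definition braid_of n (m : 'M[rat]_n) : 'M[algC]_n :=
  \matrix_(i, j) eipi (m i j).

Definition m_cartan n (m : 'M[rat]_n) (i : 'I_n) : Prop :=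
  forall j, j != i -> condA (cartan (braid_of m)) m i j.
Definition m_truncation n (m : 'M[rat]_n) (i : 'I_n) : Prop :=
  forall j, j != i -> condB (cartan (braid_of m)) m i j.

Definition mx2 (R : Type) (a b c d : R) : 'M[R]_2 :=
  \matrix_(i < 2, j < 2)
    if (i : nat) == 0%N then (if (j : nat) == 0%N then a else b)
    else (if (j : nat) == 0%N then c else d).

Definition i1 : 'I_2 := ord0.
Definition i2 : 'I_2 := ord_max.

Definition zeta : algC := eipi (5%:R / 6%:R).

Definition mI : 'M[rat]_2 :=
  mx2 (2%:R/3%:R) (-(7%:R/12%:R)) (-(7%:R/12%:R)) (2%:R/3%:R).
Definition mII : 'M[rat]_2 :=
  mx2 (2%:R/3%:R) (-(3%:R/4%:R)) (-(3%:R/4%:R)) 1.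
Definition mIII : 'M[rat]_2 :=
  mx2 (1%:R/6%:R) (-(1%:R/4%:R)) (-(1%:R/4%:R)) 1.
Definition Pmx : 'M[rat]_2 := mx2 1 0 1 (-1).

(* Main.v *)
Require Import Defs.
From HB Require Import structures.
From mathcomp Require Import all_boot all_order all_algebra all_field.
From mathcomp Require Import ring.
From Stdlib Require Import ClassicalEpsilon FunctionalExtensionality.
Import Order.TTheory GRing.Theory Num.Theory.
Local Open Scope ring_scope.

Lemma root_uniq (n : nat) (x y : algC) : (0 < n)%N -> y ^+ n = x -> 0 <= 'Im y ->
  (forall z, z ^+ n = x -> 0 <= 'Im z -> 'Re z <= 'Re y) -> n.-root x = y.
Proof.
move=> n0 yx Iy H.
have rx : (n.-root x) ^+ n = x := rootCK n0 x.
case: (ltngtP n 1) => [|n1|n1]; first by rewrite ltnNge n0.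
2: by move: yx rx; rewrite n1 root1C !expr1 => ->.
set r := n.-root x in rx *.
have Ir : 0 <= 'Im r := Im_rootC_ge0 x n1.
have ReE : 'Re r = 'Re y.
  by apply/le_anti; rewrite H // rootC_Re_max.
have NE : `|r| = `|y|.
  by apply/eqP; rewrite -(eqrXn2 n0) ?normr_ge0 // -!normrX rx yx.
have ImE : 'Im r = 'Im y.
  apply/eqP; rewrite -(eqrXn2 (isT : (0 < 2)%N)) //.
  have := normC2_Re_Im r; have := normC2_Re_Im y; rewrite NE ReE => -> /addrI ->.
  by [].
by rewrite [r]Crect [y]Crect ReE ImE.
Qed.

Set Implicit Arguments. Unset Strict Implicit.


Lemma norm1_of (k : nat) (s : algC) : (0 < k)%N -> s ^+ k = -1 -> `|s| = 1.
Proof.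
move=> k0 sk; apply/eqP; rewrite -(eqrXn2 k0) ?normr_ge0 // -normrX sk.
by rewrite normrN normr1 expr1n.
Qed.

Lemma ReIm1 (s : algC) : `|s| = 1 -> 'Re s ^+ 2 + 'Im s ^+ 2 = 1.
Proof. by move=> h; rewrite -normC2_Re_Im h expr1n. Qed.

Lemma refl_root (n : nat) (s : algC) : s ^+ (n * 2) = -1 -> (- s^*) ^+ (n * 2) = -1.
Proof.
move=> h; rewrite mulnC exprM sqrrN -exprM mulnC -rmorphXn h.
exact: conjCN1.
Qed.

Lemma Re_oppconj (s : algC) : 'Re (- s^*) = - 'Re s.
Proof. by rewrite raddfN /= Re_conj. Qed.
Lemma Im_oppconj (s : algC) : 'Im (- s^*) = 'Im s.
Proof. by rewrite raddfN /= Im_conj opprK. Qed.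

Lemma double_root (n m : nat) : (0 < n)%N -> m = (n * 2)%N ->
  (m.-root (-1 : algC)) ^+ 2 = n.-root (-1) /\ 0 <= 'Re (m.-root (-1 : algC)).
Proof.
move=> n0 ->; set r := (n * 2).-root (-1).
have m0 : (0 < n * 2)%N by rewrite muln_gt0 n0.
have m1 : (1 < n * 2)%N by exact: (leq_pmull 2 n0).
have rx : r ^+ (n * 2) = -1 := rootCK m0 (-1).
have Ir : 0 <= 'Im r := Im_rootC_ge0 (-1) m1.
have bnd : forall s, s ^+ (n * 2) = -1 -> 0 <= 'Im s -> `|'Re s| <= 'Re r.
  move=> s hs hI; rewrite real_ler_norml ?Creal_Re //.
  rewrite rootC_Re_max // andbT lerNl -Re_oppconj rootC_Re_max //.
    exact: refl_root.
  by rewrite Im_oppconj.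
have Rr : 0 <= 'Re r by apply: le_trans (bnd r rx Ir); apply: normr_ge0.
split=> //.
have nr := ReIm1 (norm1_of m0 rx).
symmetry; apply: root_uniq => //.
- by rewrite -exprM mulnC.
- by rewrite ImM addr_ge0 // mulr_ge0.
move=> z hz hIz.
set s := sqrtC z.
have sz : s ^+ 2 = z := sqrtCK z.
have Is : 0 <= 'Im s := Im_rootC_ge0 z (isT : (1 < 2)%N).
have hs : s ^+ (n * 2) = -1 by rewrite mulnC exprM sz.
have ns := ReIm1 (norm1_of m0 hs).
have b := bnd s hs Is.
rewrite -sz !expr2 !ReM -!expr2.
have e1 : 'Re s ^+ 2 - 'Im s ^+ 2 = 2 * 'Re s ^+ 2 - 1.
  have -> : 'Im s ^+ 2 = 1 - 'Re s ^+ 2 by rewrite -ns addrC addKr.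
  ring.
have e2 : 'Re r ^+ 2 - 'Im r ^+ 2 = 2 * 'Re r ^+ 2 - 1.
  have -> : 'Im r ^+ 2 = 1 - 'Re r ^+ 2 by rewrite -nr addrC addKr.
  ring.
rewrite e1 e2 lerD2r ler_pM2l // -real_normK ?Creal_Re //.
by rewrite expr2 [X in _ <= X]expr2 ler_pM ?normr_ge0.
Qed.


Lemma Re_c3 : 2^-1 <= 'Re (3.-root (-1 : algC)).
Proof.
set a : algC := sqrtC 3.
have a2 : a ^+ 2 = 3 := sqrtCK 3.
have ar : a \is Num.real by rewrite ger0_real // sqrtC_ge0 ler0n.
set y2 : algC := 1 + 'i * a.
have y23 : y2 ^+ 3 = - 8.
  have -> : y2 ^+ 3 = 1 + 3 * ('i * a) + 3 * ('i ^+ 2 * a ^+ 2) + 'i ^+ 2 * a ^+ 2 * ('i * a).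
    by rewrite /y2; ring.
  rewrite sqrCi a2; ring.
have h2 : (2 : algC) != 0 by rewrite pnatr_eq0.
have hr : (2 : algC)^-1 \is Num.real by rewrite rpredV realn.
have := @rootC_Re_max _ 3 (-1) (y2 / 2) isT.
rewrite ReMr // /y2 Re_rect ?rpred1 // mul1r; apply.
  rewrite exprMn y23 exprVn mulNr -natrX divff // pnatr_eq0.
  by [].
rewrite ImMr // Im_rect ?rpred1 // mulr_ge0 //.
  by rewrite sqrtC_ge0 ler0n.
by rewrite invr_ge0 ler0n.
Qed.


Definition w : algC := 12.-root (-1).

Lemma w12 : w ^+ 12 = -1. Proof. exact: rootCK. Qed.

Lemma c6 : 6.-root (-1 : algC) = w ^+ 2.
Proof. by case: (double_root (n:=6) (m:=12) isT erefl). Qed.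

Lemma c3 : 3.-root (-1 : algC) = w ^+ 4.
Proof.
case: (double_root (n:=3) (m:=6) isT erefl) => <- _.
by rewrite c6 -exprM.
Qed.

Lemma c1 : 1.-root (-1 : algC) = w ^+ 12.
Proof. by rewrite root1C w12. Qed.

Lemma one_neq_m1 : (1 : algC) != -1.
Proof. by rewrite -subr_eq0 opprK (_ : 1 + 1 = 2%:R) // pnatr_eq0. Qed.

Lemma w_facts : 0 < 'Re (w ^+ 3) /\ 0 <= 'Im (w ^+ 6).
Proof.
have m12 : (1 < 12)%N by [].
have Iw : 0 <= 'Im w by apply: Im_rootC_ge0.
have [_ Rw] := double_root (n:=6) (m:=12) isT erefl.
have [_ Rw2] := double_root (n:=3) (m:=6) isT erefl.
rewrite c6 in Rw2. have {}Rw : 0 <= 'Re w := Rw.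
have R4 := Re_c3; rewrite c3 in R4.
set x := 'Re w in Rw *; set y := 'Im w in Iw *.
have n1 : x ^+ 2 + y ^+ 2 = 1 := ReIm1 (norm1_of (isT : (0 < 12)%N) w12).
have w24 : (w ^+ 2) ^+ 6 = -1 by rewrite -exprM; exact: w12.
have n2 := ReIm1 (norm1_of (isT : (0 < 6)%N) w24).
set u := 'Re (w ^+ 2) in Rw2 n2 *; set v := 'Im (w ^+ 2) in n2 *.
have eu : u = x ^+ 2 - y ^+ 2 by rewrite /u expr2 ReM.
have ev : v = 2 * x * y by rewrite /v expr2 ImM; ring.
have e4 : 'Re (w ^+ 4) = u ^+ 2 - v ^+ 2.
  by rewrite (exprM w 2 2) [X in 'Re X]expr2 ReM -!expr2.
have vpos : 0 <= v by rewrite ev !mulr_ge0 ?ler0n.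
have hu : 0 < 2 * u - 1.
  have p : 0 < 2 * u + 1 by rewrite ltr_wpDl ?ltr01 // mulr_ge0 ?ler0n.
  rewrite -(pmulr_lgt0 _ p).
  have -> : (2 * u - 1) * (2 * u + 1) = 2 * (u ^+ 2 - v ^+ 2) + 1.
    have -> : v ^+ 2 = 1 - u ^+ 2 by rewrite -n2 addrC addKr.
    ring.
  rewrite -e4 ltr_wpDl ?ltr01 // mulr_ge0 ?ler0n //.
  by apply: le_trans R4; rewrite invr_ge0 ler0n.
have xpos : 0 < x.
  rewrite lt_def Rw andbT; apply/eqP => x0.
  move: hu; rewrite eu x0 expr0n /= sub0r.
  suff : 2 * - y ^+ 2 - 1 < 0 by move/lt_gtF ->.
  rewrite subr_lt0; apply: (le_lt_trans _ ltr01).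
  by rewrite mulrN oppr_le0 mulr_ge0 ?ler0n ?exprn_ge0.
have e3 : 'Re (w ^+ 3) = x * (2 * u - 1).
  rewrite exprS ReM -/x -/y -/u -/v eu ev.
  have t : (2 : algC) * (x ^+ 2 - y ^+ 2) - (x ^+ 2 + y ^+ 2) = x ^+ 2 - 3 * y ^+ 2.
    by ring.
  rewrite n1 in t; rewrite t.
  ring.
have R3p : 0 < 'Re (w ^+ 3) by rewrite e3 mulr_gt0.
split => //.
have I3 : 0 <= 'Im (w ^+ 3).
  rewrite exprS ImM -/x -/y -/u -/v.
  by apply: addr_ge0; apply: mulr_ge0 => //; apply: ltW.
rewrite (exprM w 3 2) [X in 'Im X]expr2 ImM.
by apply: addr_ge0; apply: mulr_ge0 => //; apply: ltW.
Qed.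


Lemma sq_cases (a b : algC) : a ^+ 2 = b ^+ 2 -> a = b \/ a = - b.
Proof.
move=> h; have : (a - b) * (a + b) == 0.
  by rewrite -subr_sqr h subrr.
rewrite mulf_eq0 => /orP[]; rewrite ?subr_eq0 ?addr_eq0 => /eqP; tauto.
Qed.

Lemma c2 : 2.-root (-1 : algC) = w ^+ 6.
Proof.
have [_ I6] := w_facts.
have h : (2.-root (-1 : algC)) ^+ 2 = (w ^+ 6) ^+ 2.
  by rewrite rootCK // -exprM w12.
case: (sq_cases h) => // e.
have Ic : 0 <= 'Im (2.-root (-1 : algC)) by apply: Im_rootC_ge0.
rewrite e raddfN /= oppr_ge0 in Ic.
have I0 : 'Im (w ^+ 6) = 0 by apply/le_anti; rewrite Ic I6.
have /Creal_ImP := I0 => rl.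
have := real_normK rl; rewrite -exprM w12 => /(congr1 (fun t => 0 <= t)).
rewrite exprn_ge0 ?normr_ge0 // => /esym; rewrite oppr_ge0 => h1.
by have := le_lt_trans h1 ltr01; rewrite ltxx.
Qed.

Lemma c4 : 4.-root (-1 : algC) = w ^+ 3.
Proof.
have [R3 _] := w_facts.
case: (double_root (n:=2) (m:=4) isT erefl) => h R.
rewrite c2 (exprM w 3 2) in h.
case: (sq_cases h) => // e.
rewrite e raddfN /= oppr_ge0 in R.
by have := lt_le_trans R3 R; rewrite ltxx.
Qed.

Lemma w8 : w ^+ 8 != 1.
Proof.
apply/eqP => h.
have e : 3.-root (-1 : algC) = -1.
  have := rootCK (isT : (0 < 3)%N) (-1 : algC).
  by rewrite c3 -exprM (exprD w 8 4) h mul1r.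
have := Re_c3; rewrite e (Creal_ReP _ _) ?rpredN1 //.
move=> h1; have := le_lt_trans h1 (_ : -1 < 0).
rewrite oppr_lt0 ltr01 => /(_ isT) h2; have := lt_trans h2 (_ : 0 < 2^-1).
by rewrite invr_gt0 ltr0n ltxx => /(_ isT).
Qed.

Lemma w_prim : 24.-primitive_root w.
Proof.
have w24 : w ^+ 24 = 1 by rewrite (exprM w 12 2) w12 sqrrN expr1n.
have [m pm dm] := prim_order_exists (isT : (0 < 24)%N) w24.
have d12 : ~~ (m %| 12)%N.
  by rewrite (prim_order_dvd pm) w12 eq_sym one_neq_m1.
have d8 : ~~ (m %| 8)%N by rewrite (prim_order_dvd pm) w8.
have : (m \in divisors 24) by rewrite -dvdn_divisors.
have -> : divisors 24 = [:: 1; 2; 3; 4; 6; 8; 12; 24]%N by [].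
move=> hm; move: d12 d8 pm; move: hm.
by rewrite !inE => /orP[/eqP->|/orP[/eqP->|/orP[/eqP->|/orP[/eqP->|/orP[/eqP->|/orP[/eqP->|/orP[/eqP->|/eqP->]]]]]]].
Qed.

Lemma w_neq0 : w != 0.
Proof. by rewrite (prim_root_eq0 w_prim). Qed.

Lemma wz1 (k : int) : (w ^ k == 1) = (24 %| k)%Z.
Proof.
rewrite dvdzE /=; case: k => n /=.
  by rewrite -(prim_order_dvd w_prim).
by rewrite invr_eq1 -(prim_order_dvd w_prim).
Qed.


Definition int12 (r : rat) : bool := Posz 12 \in dvdz (denq r).
Definition e12 (r : rat) : int := numq r * divz (Posz 12) (denq r).

Lemma e12R r : int12 r -> (e12 r)%:~R = 12 * r.
Proof.
move=> h; rewrite /e12 intrM.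
have : divz (Posz 12) (denq r) * denq r = Posz 12 by apply: divzK.
move=> /(congr1 (fun z : int => z%:~R : rat)); rewrite intrM => e.
have dn : (denq r)%:~R != 0 :> rat by rewrite intr_eq0 denq_neq0.
apply: (mulIf dn); rewrite -mulrA e numqE; ring.
Qed.

Lemma eqw (x y : int) : (w ^ x == w ^ y) = ((x - y) \in dvdz 24).
Proof.
have wy : w ^ y != 0 by rewrite expfz_neq0 // w_neq0.
rewrite -wz1 expfzDr ?w_neq0 // -exprz_inv -expfV.
apply/eqP/eqP => [->|h]; first by rewrite mulfV.
by rewrite -[w ^ x](divfK wy) h mul1r.
Qed.

Lemma eipiE r : int12 r -> eipi r = w ^ e12 r.
Proof.
rewrite /int12 /eipi /e12 => h.
have dp := denq_gt0 r.
have hd : denq r = (`|denq r|%N)%:Z by rewrite gtz0_abs.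
move: h; rewrite hd; move: (`|denq r|%N) => d.
rewrite dvdzE /= divz_nat => hdv.
have : d \in divisors 12 by rewrite -dvdn_divisors.
have -> : divisors 12 = [:: 1; 2; 3; 4; 6; 12]%N by [].
rewrite !inE => /orP[/eqP->|/orP[/eqP->|/orP[/eqP->|/orP[/eqP->|/orP[/eqP->|/eqP->]]]]].
- by rewrite c1 exprnP exprz_exp; congr (w ^ _); rewrite mulrC; reflexivity.
- by rewrite c2 exprnP exprz_exp; congr (w ^ _); rewrite mulrC; reflexivity.
- by rewrite c3 exprnP exprz_exp; congr (w ^ _); rewrite mulrC; reflexivity.
- by rewrite c4 exprnP exprz_exp; congr (w ^ _); rewrite mulrC; reflexivity.
- by rewrite c6 exprnP exprz_exp; congr (w ^ _); rewrite mulrC; reflexivity.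
- by rewrite -[12.-root _]/w (_ : (12 %/ 12)%N = 1%N) // mulr1.
Qed.


Lemma prod_w (I : Type) (r : seq I) (P : pred I) (F : I -> int) :
  \prod_(i <- r | P i) w ^ F i = w ^ (\sum_(i <- r | P i) F i).
Proof.
apply: (big_rec2 (fun x y => x = w ^ y)) => // i x y _ ->.
by rewrite expfzDr ?w_neq0.
Qed.

Definition all12 n (m : 'M[rat]_n) := forall i j, int12 (m i j).

Lemma chi_braid n (m : 'M[rat]_n) a b : all12 m ->
  chi (braid_of m) a b = w ^ (\sum_i \sum_j e12 (m i j) * (a i * b j)).
Proof.
move=> h; rewrite /chi.
under eq_bigr => i _ do (under eq_bigr => j _ do rewrite mxE eipiE // exprz_exp; rewrite prod_w).
by rewrite prod_w.
Qed.

Lemma refl_braid_of n (m : 'M[rat]_n) A k : all12 m -> all12 (refl_gram m A k) ->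
  refl_braid (braid_of m) A k = braid_of (refl_gram m A k).
Proof.
move=> h1 h2; apply/matrixP => i j; rewrite [LHS]mxE chi_braid //.
rewrite [RHS]mxE eipiE //; congr (w ^ _).
apply: (@intr_inj rat); rewrite e12R // mxE rmorph_sum mulr_sumr.
apply: eq_bigr => l _; rewrite rmorph_sum mulr_sumr; apply: eq_bigr => l' _.
rewrite -[X in X = _]/(((e12 (m l l') * (refl_vec A k i l * refl_vec A k j l'))%:~R : rat)).
by rewrite intrM e12R // intrM; ring.
Qed.

Definition cpred (a b c : int) : pred nat :=
  fun s => (b + c + a * s%:Z \in dvdz 24) || (a * s.+1%:Z \in dvdz 24).

Definition cs (a b c : int) : nat := find (cpred a b c) (iota 0 24).

Lemma dvdz_sym (d x y : int) : x = - y -> (x \in dvdz d) = (y \in dvdz d).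
Proof. by move->; rewrite rpredN. Qed.

Lemma cartan_predE n (m : 'M[rat]_n) i j s : all12 m ->
  cartan_pred (braid_of m) i j s = cpred (e12 (m i i)) (e12 (m i j)) (e12 (m j i)) s.
Proof.
move=> h; rewrite /cartan_pred /cpred !mxE !eipiE // exprnN exprz_exp.
rewrite -expfzDr ?w_neq0 // eqw exprnP exprz_exp wz1.
congr (_ || _); move: (e12 _) (e12 _) (e12 _) => a b c.
by apply: dvdz_sym; ring.
Qed.

Lemma cpred23 a b c : cpred a b c 23.
Proof. by apply/orP; right; apply: dvdz_mull; apply: dvdzz. Qed.

Lemma cs_spec a b c : cpred a b c (cs a b c) /\ forall s, (s < cs a b c)%N -> ~~ cpred a b c s.
Proof.
have hh : has (cpred a b c) (iota 0 24).
  by apply/hasP; exists 23%N; rewrite ?mem_iota //; apply: cpred23.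
have lt : (cs a b c < 24)%N by rewrite /cs -(size_iota 0 24) -has_find.
split.
  by have := nth_find 0%N hh; rewrite nth_iota.
move=> s hs; have := before_find 0%N hs; rewrite nth_iota ?add0n => [->//|].
exact: ltn_trans hs lt.
Qed.

Lemma cartan_sE n (m : 'M[rat]_n) i j : all12 m ->
  cartan_s (braid_of m) i j = cs (e12 (m i i)) (e12 (m i j)) (e12 (m j i)).
Proof.
move=> h; rewrite /cartan_s; case: excluded_middle_informative => [H|H].
  case: ex_minnP => s Ps mins.
  have [c1 c2] := cs_spec (e12 (m i i)) (e12 (m i j)) (e12 (m j i)).
  rewrite cartan_predE // in Ps.
  apply/eqP; rewrite eqn_leq mins /=; last by rewrite cartan_predE.
  by rewrite leqNgt; apply/negP => /c2; rewrite Ps.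
exfalso; apply: H; exists 23%N; rewrite cartan_predE //; exact: cpred23.
Qed.

Lemma cartanE n (m : 'M[rat]_n) : all12 m ->
  cartan (braid_of m) = \matrix_(i, j) if i == j then 2
     else - (cs (e12 (m i i)) (e12 (m i j)) (e12 (m j i)))%:Z.
Proof.
by move=> h; apply/matrixP => i j; rewrite !mxE cartan_sE.
Qed.

Lemma cartan_finiteE n (m : 'M[rat]_n) : all12 m -> cartan_finite (braid_of m).
Proof. by move=> h i j _; exists 23%N; rewrite cartan_predE //; apply: cpred23. Qed.


Lemma I2P (i : 'I_2) : i = i1 \/ i = i2.
Proof. by case: i => [[|[|//]]] h; [left|right]; apply: val_inj. Qed.

Section M2.
Variable R : Type.
Variables a b c d : R.
Lemma mx2_11 : mx2 a b c d i1 i1 = a. Proof. by rewrite mxE. Qed.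
Lemma mx2_12 : mx2 a b c d i1 i2 = b. Proof. by rewrite mxE. Qed.
Lemma mx2_21 : mx2 a b c d i2 i1 = c. Proof. by rewrite mxE. Qed.
Lemma mx2_22 : mx2 a b c d i2 i2 = d. Proof. by rewrite mxE. Qed.
End M2.
Definition mx2E := (mx2_11, mx2_12, mx2_21, mx2_22).

Lemma mx2_eta (R : Type) (M : 'M[R]_2) : M = mx2 (M i1 i1) (M i1 i2) (M i2 i1) (M i2 i2).
Proof.
apply/matrixP => i j; case: (I2P i) => ->; case: (I2P j) => ->; by rewrite mx2E.
Qed.

Lemma all12_mx2 a b c d : int12 a -> int12 b -> int12 c -> int12 d -> all12 (mx2 a b c d).
Proof.
move=> ha hb hc hd i j; case: (I2P i) => ->; case: (I2P j) => ->; by rewrite mx2E.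
Qed.

Lemma i12F : (i1 == i2) = false. Proof. by []. Qed.
Lemma i21F : (i2 == i1) = false. Proof. by []. Qed.

Lemma cartan_mx2 a b c d : all12 (mx2 a b c d) ->
  cartan (braid_of (mx2 a b c d)) =
  mx2 2 (- (cs (e12 a) (e12 b) (e12 c))%:Z) (- (cs (e12 d) (e12 c) (e12 b))%:Z) 2.
Proof.
move=> h; rewrite cartanE //; apply/matrixP => i j; rewrite mxE.
case: (I2P i) => ->; case: (I2P j) => ->; by rewrite ?mx2E ?eqxx ?i12F ?i21F.
Qed.

Lemma sum2 (F : 'I_2 -> rat) : \sum_(l < 2) F l = F i1 + F i2.
Proof. by rewrite big_ord_recl big_ord1; congr (_ + F _); apply: val_inj. Qed.

Lemma refl_gram1 a b c d (p q : int) :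
  refl_gram (mx2 a b c d) (mx2 2 p q 2) i1 =
  mx2 a (p%:~R * a - b) (p%:~R * a - c) (p%:~R ^+ 2 * a - p%:~R * b - p%:~R * c + d).
Proof.
apply/matrixP => i j; rewrite mxE !sum2 /refl_vec !mx2E.
case: (I2P i) => ->; case: (I2P j) => ->;
  rewrite !mx2E ?eqxx ?i12F ?i21F /= !intrD ?intrN !intrM /=; ring.
Qed.

Lemma refl_gram2 a b c d (p q : int) :
  refl_gram (mx2 a b c d) (mx2 2 p q 2) i2 =
  mx2 (a - q%:~R * b - q%:~R * c + q%:~R ^+ 2 * d) (q%:~R * d - b) (q%:~R * d - c) d.
Proof.
apply/matrixP => i j; rewrite mxE !sum2 /refl_vec !mx2E.
case: (I2P i) => ->; case: (I2P j) => ->;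
  rewrite !mx2E ?eqxx ?i12F ?i21F /= !intrD ?intrN !intrM /=; ring.
Qed.


Definition T4 := (rat * rat * rat * rat)%type.
Definition mx4 (t : T4) : 'M[rat]_2 := let: (a, b, c, d) := t in mx2 a b c d.
Definition ok4 (t : T4) : bool :=
  let: (a, b, c, d) := t in [&& int12 a, int12 b, int12 c & int12 d].
Definition pA (t : T4) : int := let: (a, b, c, d) := t in - (cs (e12 a) (e12 b) (e12 c))%:Z.
Definition qA (t : T4) : int := let: (a, b, c, d) := t in - (cs (e12 d) (e12 c) (e12 b))%:Z.
Definition r1 (t : T4) : T4 := let: (a, b, c, d) := t in
  let p : rat := (pA t)%:~R in (a, p * a - b, p * a - c, p ^+ 2 * a - p * b - p * c + d).
Definition r2 (t : T4) : T4 := let: (a, b, c, d) := t in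
  let q : rat := (qA t)%:~R in (a - q * b - q * c + q ^+ 2 * d, q * d - b, q * d - c, d).
Definition condAB (t : T4) : bool := let: (a, b, c, d) := t in
  let p : rat := (pA t)%:~R in let q : rat := (qA t)%:~R in
  ((2 * b == p * a) || ((1 - p) * a == 2)) && ((2 * c == q * d) || ((1 - q) * d == 2)).

Definition tI : T4 := (2%:R/3%:R, -(7%:R/12%:R), -(7%:R/12%:R), 2%:R/3%:R).
Definition tII : T4 := (2%:R/3%:R, -(3%:R/4%:R), -(3%:R/4%:R), 1).
Definition tIII : T4 := (1%:R/6%:R, -(1%:R/4%:R), -(1%:R/4%:R), 1).
Definition tII' : T4 := (1, -(3%:R/4%:R), -(3%:R/4%:R), 2%:R/3%:R).
Definition tIII' : T4 := (1, -(1%:R/4%:R), -(1%:R/4%:R), 1%:R/6%:R).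
Definition L := [:: tI; tII; tIII; tII'; tIII'].

Lemma L_ok : all (fun t => [&& ok4 t, condAB t, r1 t \in L & r2 t \in L]) L.
Proof. vm_compute. reflexivity. Qed.


Lemma L_prop t : t \in L -> [&& ok4 t, condAB t, r1 t \in L & r2 t \in L].
Proof. by move=> h; have /allP := L_ok; apply. Qed.

Lemma all12_4 t : ok4 t -> all12 (mx4 t).
Proof. by case: t => [[[a b] c] d] /and4P[]; apply: all12_mx2. Qed.

Lemma cartan4 t : ok4 t -> cartan (braid_of (mx4 t)) = mx2 2 (pA t) (qA t) 2.
Proof. by case: t => [[[a b] c] d] h; rewrite cartan_mx2 //; apply: (all12_4 h). Qed.

Lemma step4 t k : ok4 t ->
  refl_gram (mx4 t) (cartan (braid_of (mx4 t))) k =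
  mx4 (if k == i1 then r1 t else r2 t).
Proof.
move=> h; rewrite cartan4 //; case: (I2P k) => ->; rewrite ?eqxx ?i21F;
  case: t h => [[[a b] c] d] _.
  by rewrite refl_gram1.
by rewrite refl_gram2.
Qed.

Definition Inv (qm : 'M[algC]_2 * 'M[rat]_2) :=
  exists2 t, t \in L & qm = (braid_of (mx4 t), mx4 t).

Lemma Inv_step qm k : Inv qm -> Inv (refl_step qm k).
Proof.
case=> t tL ->; have /and4P[ok cab h1 h2] := L_prop tL.
exists (if k == i1 then r1 t else r2 t); first by case: (k == i1).
rewrite /refl_step /= step4 // refl_braid_of ?step4 //; first exact: all12_4.
apply: all12_4; case: (k == i1).
  by case/and4P: (L_prop h1).
by case/and4P: (L_prop h2).
Qed.

Lemma Inv_good qm : Inv qm ->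
  cartan_finite qm.1 /\
  forall i j, i != j -> condA (cartan qm.1) qm.2 i j \/ condB (cartan qm.1) qm.2 i j.
Proof.
case=> t tL -> /=; have /and4P[ok cab _ _] := L_prop tL.
split; first by apply: cartan_finiteE; apply: all12_4.
rewrite cartan4 //; move: ok cab; case: t {tL} => [[[a b] c] d] /= _ /andP[h1 h2].
move=> i j; case: (I2P i) => ->; case: (I2P j) => ->; rewrite ?eqxx // => _;
  rewrite /condA /condB !mx2E.
- by case/orP: h1 => /eqP; [left|right].
- by case/orP: h2 => /eqP; [left|right].
Qed.

Lemma realises_I : realises mI (braid_of mI).
Proof.
split.
  apply/matrixP => i j; rewrite mxE.
  by case: (I2P i) => ->; case: (I2P j) => ->; rewrite !mx2E.
split; first by move=> i j; rewrite [RHS]mxE.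
move=> ks; have : Inv (braid_of mI, mI) by exists tI.
rewrite /refl_iter; elim: ks (braid_of mI, mI) => [|k ks IH] qm hq /=.
  exact: Inv_good.
by apply: IH; apply: Inv_step.
Qed.


Lemma weq (x y : int) : (x - y \in dvdz 24) -> w ^ x = w ^ y.
Proof. by rewrite -eqw => /eqP. Qed.
Lemma wN (x : int) : - w ^ x = w ^ (x + 12).
Proof. by rewrite expfzDr ?w_neq0 // -exprnP w12 mulrN1. Qed.
Lemma wX (x : int) (n : nat) : (w ^ x) ^+ n = w ^ (x * n%:Z).
Proof. by rewrite exprnP exprz_exp. Qed.
Lemma wV (x : int) : (w ^ x)^-1 = w ^ (- x).
Proof. by rewrite -exprz_inv expfV. Qed.
Lemma wM (x y : int) : w ^ x * w ^ y = w ^ (x + y).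
Proof. by rewrite expfzDr ?w_neq0. Qed.
Lemma wm1 : -1 = w ^ 12.
Proof. by rewrite -w12. Qed.

Lemma zetaE : zeta = w ^ e12 (5%:R / 6%:R).
Proof. by rewrite /zeta eipiE //; vm_compute. Qed.

Lemma bq t i j : ok4 t -> braid_of (mx4 t) i j = w ^ e12 (mx4 t i j).
Proof. by move=> h; rewrite mxE eipiE //; apply: all12_4. Qed.

Lemma mulmx2 (a b c d e f g h : rat) :
  mx2 a b c d *m mx2 e f g h = mx2 (a * e + b * g) (a * f + b * h) (c * e + d * g) (c * f + d * h).
Proof.
apply/matrixP => i j; rewrite mxE sum2.
by case: (I2P i) => ->; case: (I2P j) => ->; rewrite !mx2E.
Qed.

Lemma trmx2 (a b c d : rat) : (mx2 a b c d)^T = mx2 a c b d.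
Proof.
apply/matrixP => i j; rewrite mxE.
by case: (I2P i) => ->; case: (I2P j) => ->; rewrite !mx2E.
Qed.

Lemma okI : ok4 tI. Proof. by vm_compute. Qed.
Lemma okII : ok4 tII. Proof. by vm_compute. Qed.
Lemma okIII : ok4 tIII. Proof. by vm_compute. Qed.

Lemma eI : mI = mx4 tI. Proof. by []. Qed.
Lemma eII : mII = mx4 tII. Proof. by []. Qed.
Lemma eIII : mIII = mx4 tIII. Proof. by []. Qed.

Lemma i2i1 : i2 != i1. Proof. by []. Qed.
Lemma i1i2 : i1 != i2. Proof. by []. Qed.


Lemma mx2_congr (R : Type) (a b c d a' b' c' d' : R) :
  a = a' -> b = b' -> c = c' -> d = d' -> mx2 a b c d = mx2 a' b' c' d'.
Proof. by move=> -> -> -> ->. Qed.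

Ltac wsolve :=
  rewrite ?zetaE ?wm1 ?(wX, wV, wM, wN); apply: weq; vm_compute; reflexivity.

Theorem mainTheorem12 :
  let qI := braid_of mI in
  let qII := braid_of mII in
  let qIII := braid_of mIII in
  (
   12.-primitive_root zeta) /\
   [/\ qI i1 i1 = - zeta ^+ 2, qI i2 i2 = - zeta ^+ 2,
       qI i1 i2 * qI i2 i1 = zeta,
       cartan_finite qI & cartan qI = mx2 2 (-2) (-2) 2] /\
   [/\ qII i1 i1 = - zeta ^+ 2, qII i2 i2 = -1,
       qII i1 i2 * qII i2 i1 = zeta ^+ 3,
       cartan_finite qII & cartan qII = mx2 2 (-2) (-1) 2] /\
   [/\ qIII i1 i1 = - zeta^-1, qIII i2 i2 = -1,
       qIII i1 i2 * qIII i2 i1 = - zeta ^+ 3,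
       cartan_finite qIII & cartan qIII = mx2 2 (-3) (-1) 2] /\
   [/\ refl_vec (cartan qI) i1 i1 = (fun l => - (l == i1)%:Z),
       refl_vec (cartan qI) i1 i2 = (fun l => (l == i2)%:Z + 2 * (l == i1)%:Z),
       mII = refl_gram mI (cartan qI) i1,
       mIII = Pmx^T *m mII *m Pmx &
       mIII = refl_gram mII (cartan qII) i2] /\
   realises mI qI /\
   [/\ m_truncation mI i1, m_truncation mI i2,
       m_truncation mII i1, m_truncation mII i2 &
       [/\ m_truncation mIII i2, m_cartan mIII i1 & ~ m_truncation mIII i1]].
Proof.
move=> qI qII qIII.
have cI : cartan qI = mx2 2 (pA tI) (qA tI) 2.
  rewrite /qI eI (cartan4 okI); reflexivity.
have cII : cartan qII = mx2 2 (pA tII) (qA tII) 2.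
  rewrite /qII eII (cartan4 okII); reflexivity.
have cIII : cartan qIII = mx2 2 (pA tIII) (qA tIII) 2.
  rewrite /qIII eIII (cartan4 okIII); reflexivity.
have bI : forall i j, qI i j = w ^ e12 (mI i j).
  move=> i j; rewrite /qI eI (bq _ _ okI); reflexivity.
have bII : forall i j, qII i j = w ^ e12 (mII i j).
  move=> i j; rewrite /qII eII (bq _ _ okII); reflexivity.
have bIII : forall i j, qIII i j = w ^ e12 (mIII i j).
  move=> i j; rewrite /qIII eIII (bq _ _ okIII); reflexivity.
split.
  rewrite zetaE (_ : e12 (5%:R / 6%:R) = 10%:Z); last by apply/eqP; vm_compute; reflexivity.
  rewrite -exprnP; move: (exp_prim_root w_prim 10) => h; exact: h.
split.
  split; rewrite ?bI /mI ?mx2E.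
  - wsolve.
  - wsolve.
  - wsolve.
  - rewrite -/mI /qI eI; apply: cartan_finiteE; apply: all12_4; apply: okI.
  - rewrite -/mI cI; apply: mx2_congr; apply/eqP; vm_compute; reflexivity.
split.
  split; rewrite ?bII /mII ?mx2E.
  - wsolve.
  - wsolve.
  - wsolve.
  - rewrite -/mII /qII eII; apply: cartan_finiteE; apply: all12_4; apply: okII.
  - rewrite -/mII cII; apply: mx2_congr; apply/eqP; vm_compute; reflexivity.
split.
  split; rewrite ?bIII /mIII ?mx2E.
  - wsolve.
  - wsolve.
  - wsolve.
  - rewrite -/mIII /qIII eIII; apply: cartan_finiteE; apply: all12_4; apply: okIII.
  - rewrite -/mIII cIII; apply: mx2_congr; apply/eqP; vm_compute; reflexivity.
split.
  split.
  - apply: functional_extensionality => l; rewrite /refl_vec cI !mx2E.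
    case: (I2P l) => ->; apply/eqP; vm_compute; reflexivity.
  - apply: functional_extensionality => l; rewrite /refl_vec cI !mx2E.
    case: (I2P l) => ->; apply/eqP; vm_compute; reflexivity.
  - rewrite cI /mI refl_gram1 /mII; apply: mx2_congr; apply/eqP; vm_compute; reflexivity.
  - rewrite /mIII /mII /Pmx trmx2 !mulmx2; apply: mx2_congr; apply/eqP; vm_compute; reflexivity.
  - rewrite cII /mII refl_gram2 /mIII; apply: mx2_congr; apply/eqP; vm_compute; reflexivity.
split; first exact: realises_I.
rewrite /m_truncation /m_cartan -/qI -/qII -/qIII cI cII cIII.
split.
- move=> j; case: (I2P j) => ->; first by rewrite eqxx.
  move=> _; rewrite /condB /mI !mx2E; apply/eqP; vm_compute; reflexivity.
- move=> j; case: (I2P j) => ->; last by rewrite eqxx.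
  move=> _; rewrite /condB /mI !mx2E; apply/eqP; vm_compute; reflexivity.
- move=> j; case: (I2P j) => ->; first by rewrite eqxx.
  move=> _; rewrite /condB /mII !mx2E; apply/eqP; vm_compute; reflexivity.
- move=> j; case: (I2P j) => ->; last by rewrite eqxx.
  move=> _; rewrite /condB /mII !mx2E; apply/eqP; vm_compute; reflexivity.
split.
- move=> j; case: (I2P j) => ->; last by rewrite eqxx.
  move=> _; rewrite /condB /mIII !mx2E; apply/eqP; vm_compute; reflexivity.
- move=> j; case: (I2P j) => ->; first by rewrite eqxx.
  move=> _; rewrite /condA /mIII !mx2E; apply/eqP; vm_compute; reflexivity.
- move=> /(_ i2 i2i1); rewrite /condB /mIII !mx2E => /eqP; vm_compute; discriminate.
Qed.
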